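(* There is a constant $c_1>0$ such that for all $n>5$, $$h_3(n,\{(4,0),(4,3)\}) > c_1\, n^{1/3}.$$ That is, every $n$-vertex $3$-graph in which every four vertices span $1$, $2$ or $4$ edges has a clique or coclique of size greater than $c_1 n^{1/3}$.
   Context: For an $r$-uniform hypergraph ($r$-graph) $H$, a homogeneous set is a set of vertices that is either a clique (every $r$-subset is an edge) or a coclique (no $r$-subset is an edge); $h(H)$ denotes the size of a largest homogeneous set. An $(m,f)$-graph is an $r$-graph with $m$ vertices and $f$ edges; $H$ is $(m,f)$-free if it contains no induced sub-hypergraph that is an $(m,f)$-graph. For a set $Q$ of pairs $(m,f)$, $H$ is $Q$-free if it is $(m,f)$-free for every $(m,f)\in Q$. $h_r(n,Q)$ is the minimum of $h(H)$ over all $n$-vertex $Q$-free $r$-graphs $H$. *)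

(* Defs.v *)
From mathcomp Require Import all_boot.
From Stdlib Require Import Reals.
Set Implicit Arguments. Unset Strict Implicit. Unset Printing Implicit Defensive.

Definition uniform (n r : nat) (E : {set {set 'I_n}}) : Prop :=
  forall e, e \in E -> #|e| = r.

Definition induced_edges (n : nat) (E : {set {set 'I_n}}) (S : {set 'I_n}) : nat :=
  #|[set e in E | e \subset S]|.

Definition mf_free (n : nat) (E : {set {set 'I_n}}) (m f : nat) : Prop :=
  forall S : {set 'I_n}, #|S| = m -> induced_edges E S <> f.

Definition Q_free (n : nat) (E : {set {set 'I_n}}) (Q : seq (nat * nat)) : Prop :=
  forall p, p \in Q -> mf_free E p.1 p.2.

Definition clique (n r : nat) (E : {set {set 'I_n}}) (S : {set 'I_n}) : Prop :=
  forall e : {set 'I_n}, e \subset S -> #|e| = r -> e \in E.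

Definition coclique (n r : nat) (E : {set {set 'I_n}}) (S : {set 'I_n}) : Prop :=
  forall e : {set 'I_n}, e \subset S -> #|e| = r -> e \notin E.

Definition homogeneous (n r : nat) (E : {set {set 'I_n}}) (S : {set 'I_n}) : Prop :=
  clique r E S \/ coclique r E S.

(* Main.v *)
Require Import Defs.
From mathcomp Require Import all_boot.
From Stdlib Require Import Reals Lra Lia.

Section Four.
Variable n : nat.
Variable E : {set {set 'I_n}}.
Hypothesis U : uniform 3 E.

Lemma edges_count (S : {set 'I_n}) : #|S| = 4 ->
  induced_edges E S = #|[set x in S | S :\ x \in E]|.
Proof.
move=> S4; rewrite /induced_edges.
have -> : [set e in E | e \subset S] = [set S :\ x | x in [set x in S | S :\ x \in E]].
  apply/setP => e; rewrite inE; apply/andP/imsetP.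
  - case=> eE eS; have e3 := U _ eE.
    have /cards1P [x Hx] : #|S :\: e| == 1.
      by rewrite cardsD (setIidPr eS) S4 e3.
    have xS : x \in S.
      have : x \in S :\: e by rewrite Hx set11.
      by rewrite inE => /andP[].
    have ee : S :\ x = e by rewrite -Hx setDDr setDv set0U (setIidPr eS).
    by exists x => //; rewrite inE xS ee eE.
  - by case=> x; rewrite inE => /andP[xS xE] ->; split => //; apply: subsetDl.
apply: card_in_imset => x y; rewrite !inE => /andP[xS _] /andP[yS _] Hxy.
case: (eqVneq x y) => // nxy.
have : x \in S :\ y by rewrite !inE nxy xS.
by rewrite -Hxy !inE eqxx.
Qed.

Hypothesis F0 : forall S : {set 'I_n}, #|S| = 4 -> induced_edges E S <> 0.
Hypothesis F3 : forall S : {set 'I_n}, #|S| = 4 -> induced_edges E S <> 3.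

Lemma L0 (S : {set 'I_n}) : #|S| = 4 -> (forall x, x \in S -> S :\ x \notin E) -> False.
Proof.
move=> S4 H; apply: (F0 _ S4); rewrite edges_count //.
apply/eqP; rewrite cards_eq0; apply/eqP/setP => x; rewrite !inE.
by apply/andP => -[xS]; apply/negP; apply: H.
Qed.

Lemma L3 (S : {set 'I_n}) x0 : #|S| = 4 -> x0 \in S -> S :\ x0 \notin E ->
  (forall y, y \in S -> y != x0 -> S :\ y \in E) -> False.
Proof.
move=> S4 x0S nE H; apply: (F3 _ S4); rewrite edges_count //.
have -> : [set x in S | S :\ x \in E] = S :\ x0.
  apply/setP => y; rewrite !inE; case: (eqVneq y x0) => [->|ny] /=.
    by rewrite (negbTE nE) andbF.
  by case yS: (y \in S) => //=; apply: H.
by move: S4; rewrite (cardsD1 x0) x0S => -[].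
Qed.
End Four.
Section Link.
Variable n : nat.
Variable E : {set {set 'I_n}}.
Hypothesis U : uniform 3 E.
Hypothesis F0 : forall S : {set 'I_n}, #|S| = 4 -> induced_edges E S <> 0.
Hypothesis F3 : forall S : {set 'I_n}, #|S| = 4 -> induced_edges E S <> 3.

Definition te (a b c : 'I_n) := [set a; b; c] \in E.

Lemma teC12 a b c : te a b c = te b a c.
Proof. by rewrite /te; congr (_ \in E); apply/setP=>z; rewrite !inE; case: (z==a); case: (z==b); case: (z==c). Qed.
Lemma teC23 a b c : te a b c = te a c b.
Proof. by rewrite /te; congr (_ \in E); apply/setP=>z; rewrite !inE; case: (z==a); case: (z==b); case: (z==c). Qed.

Definition dist4 (a b c d : 'I_n) :=
  (a != b) /\ (a != c) /\ (a != d) /\ (b != c) /\ (b != d) /\ (c != d).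

Lemma cardU1r (A : {set 'I_n}) x : x \notin A -> #|A :|: [set x]| = #|A|.+1.
Proof. by move=> xA; rewrite setUC cardsU1 xA. Qed.

Lemma card4 a b c d : dist4 a b c d -> #|[set a; b; c; d]| = 4.
Proof.
case => ab [ac [ad [bc [bd cd]]]].
rewrite cardU1r; last by rewrite !inE !(eq_sym d) (negbTE ad) (negbTE bd) (negbTE cd).
rewrite cardU1r; last by rewrite !inE !(eq_sym c) (negbTE ac) (negbTE bc).
by rewrite cards2 ab.
Qed.

Lemma rem4 a b c d : dist4 a b c d ->
  [/\ [set a; b; c; d] :\ a = [set b; c; d], [set a; b; c; d] :\ b = [set a; c; d],
      [set a; b; c; d] :\ c = [set a; b; d] & [set a; b; c; d] :\ d = [set a; b; c]].
Proof.
case => ab [ac [ad [bc [bd cd]]]].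
have ba : (b == a) = false by rewrite eq_sym (negbTE ab).
have ca : (c == a) = false by rewrite eq_sym (negbTE ac).
have da : (d == a) = false by rewrite eq_sym (negbTE ad).
have cb : (c == b) = false by rewrite eq_sym (negbTE bc).
have db : (d == b) = false by rewrite eq_sym (negbTE bd).
have dc : (d == c) = false by rewrite eq_sym (negbTE cd).
move/negbTE: ab => ab; move/negbTE: ac => ac; move/negbTE: ad => ad.
move/negbTE: bc => bc; move/negbTE: bd => bd; move/negbTE: cd => cd.
split; apply/setP => z; rewrite !inE;
 case: (eqVneq z a) => [->|za]; rewrite ?eqxx ?ab ?ac ?ad ?ba ?ca ?da ?bc ?bd ?cd ?cb ?db ?dc //=;
 case: (eqVneq z b) => [->|zb]; rewrite ?eqxx ?ab ?ac ?ad ?ba ?ca ?da ?bc ?bd ?cd ?cb ?db ?dc //=;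
 case: (eqVneq z c) => [->|zc]; rewrite ?eqxx ?ab ?ac ?ad ?ba ?ca ?da ?bc ?bd ?cd ?cb ?db ?dc //=;
 by rewrite ?(negbTE za) ?(negbTE zb) ?(negbTE zc) /= ?andbT ?orbF; case: (z == d).
Qed.

Lemma te_rot a b c : te a b c = te b c a.
Proof. by rewrite teC12 teC23. Qed.

Lemma W0 a b c d : dist4 a b c d -> ~~ te b c d -> ~~ te a c d -> ~~ te a b d -> ~~ te a b c -> False.
Proof.
move=> D h1 h2 h3 h4; case: (rem4 _ _ _ _ D) => r1 r2 r3 r4.
apply: (@L0 _ _ U F0 _ (card4 _ _ _ _ D)) => x; rewrite !inE -!orbA => /or4P [] /eqP ->.
- by rewrite r1.
- by rewrite r2.
- by rewrite r3.
- by rewrite r4.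
Qed.

Lemma W3 a b c d : dist4 a b c d -> ~~ te b c d -> te a c d -> te a b d -> te a b c -> False.
Proof.
move=> D h1 h2 h3 h4; case: (rem4 _ _ _ _ D) => r1 r2 r3 r4.
apply: (@L3 _ _ U F3 _ a (card4 _ _ _ _ D)).
- by rewrite !inE eqxx.
- by rewrite r1.
move=> x; rewrite !inE -!orbA => /or4P [] /eqP ->.
- by rewrite eqxx.
- by rewrite r2.
- by rewrite r3.
- by rewrite r4.
Qed.

Ltac dist_tac D := case: D => ? [? [? [? [? ?]]]]; repeat split; by rewrite // eq_sym.

Variable v : 'I_n.
Definition adj x y := te v x y.
Lemma adjC x y : adj x y = adj y x.
Proof. by rewrite /adj teC23. Qed.

Lemma R1 a b c : dist4 v a b c -> adj a b -> adj a c -> adj b c -> te a b c.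
Proof. move=> D h1 h2 h3; apply: contraT => h; case: (W3 _ _ _ _ D h h3 h2 h1). Qed.

Lemma R2 a b c : dist4 v a b c -> ~~ adj a b -> ~~ adj a c -> ~~ adj b c -> te a b c.
Proof. move=> D h1 h2 h3; apply: contraT => h; case: (W0 _ _ _ _ D h h3 h2 h1). Qed.

Lemma R4 a b c : dist4 v a b c -> adj a b -> adj b c -> ~~ adj a c -> ~~ te a b c.
Proof.
move=> D h1 h2 h3; apply/negP => h.
have D' : dist4 b v a c by dist_tac D.
apply: (W3 _ _ _ _ D' h3).
- by rewrite teC12.
- by rewrite teC12.
- by rewrite teC12 teC23.
Qed.

Lemma C4 a b c d : dist4 a b c d -> v != a -> v != b -> v != c -> v != d ->
  adj a b -> adj b c -> adj c d -> adj d a -> ~~ adj a c -> ~~ adj b d -> False.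
Proof.
move=> D va vb vc vd ab bc cd da ac bd.
have h1 : ~~ te a b c.
  by apply: R4 => //; dist_tac D.
have h2 : ~~ te b c d.
  by apply: R4 => //; dist_tac D.
have h3 : ~~ te c d a.
  by apply: R4 => //; [dist_tac D | rewrite adjC].
have h4 : ~~ te d a b.
  by apply: R4 => //; [dist_tac D | rewrite adjC].
apply: (W0 _ _ _ _ D h2) => //.
- by rewrite te_rot.
- by rewrite te_rot te_rot.
Qed.
End Link.

Set Implicit Arguments.
Section Main.
Variable n : nat.
Variable E : {set {set 'I_n}}.
Hypothesis U : uniform 3 E.
Hypothesis F0 : forall S : {set 'I_n}, #|S| = 4 -> induced_edges E S <> 0.
Hypothesis F3 : forall S : {set 'I_n}, #|S| = 4 -> induced_edges E S <> 3.
Variable v : 'I_n.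

Local Notation A := (adj n E v).
Local Notation T := (te n E).

Definition cliqueb (S : {set 'I_n}) :=
  [forall e : {set 'I_n}, (e \subset S) ==> (#|e| == 3) ==> (e \in E)].

Lemma cliqueP S : reflect (clique 3 E S) (cliqueb S).
Proof.
apply: (iffP forallP) => H e.
  by move=> eS e3; move: (H e); rewrite eS e3.
by apply/implyP => eS; apply/implyP => /eqP e3; apply: H.
Qed.

Lemma card3P (e : {set 'I_n}) : #|e| = 3 ->
  exists a b c, [/\ e = [set a; b; c], a != b, a != c & b != c].
Proof.
move=> e3.
have /set0Pn [a ae] : e != set0 by rewrite -card_gt0 e3.
have /cards2P [b [c [bc Hbc]]] : #|e :\ a| == 2.
  by move: e3; rewrite (cardsD1 a) ae add1n => /succn_inj ->.
have bin : b \in e :\ a by rewrite Hbc !inE ?eqxx.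
have cin : c \in e :\ a by rewrite Hbc !inE ?eqxx ?orbT.
move: bin cin; rewrite !inE => /andP[ba _] /andP[ca _].
exists a, b, c; split => //; try by rewrite eq_sym.
by rewrite -(setD1K ae) Hbc setUA.
Qed.

Lemma clique_of (S : {set 'I_n}) :
  (forall a b c, a \in S -> b \in S -> c \in S -> a != b -> a != c -> b != c -> T a b c) ->
  clique 3 E S.
Proof.
move=> H e eS /card3P [a [b [c [ee ab ac bc]]]]; subst e.
have sub : forall z, z \in [set a; b; c] -> z \in S by move=> z zi; apply: (subsetP eS).
by apply: H => //; apply: sub; rewrite !inE ?eqxx ?orbT.
Qed.

Definition indepb (K : {set 'I_n}) :=
  (v \notin K) && [forall x in K, [forall y in K, (x != y) ==> ~~ A x y]].

Lemma indep_pair (K : {set 'I_n}) x y : indepb K -> x \in K -> y \in K -> x != y -> ~~ A x y.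
Proof.
case/andP => _ /forall_inP H xK yK xy.
by move: (H x xK) => /forall_inP /(_ y yK) /implyP; apply.
Qed.

Lemma indep_intro (K : {set 'I_n}) : v \notin K ->
  (forall x y, x \in K -> y \in K -> x != y -> ~~ A x y) -> indepb K.
Proof.
move=> vK H; rewrite /indepb vK /=.
apply/forall_inP => x xK; apply/forall_inP => y yK; apply/implyP; exact: H.
Qed.

Lemma indep_sub (K K' : {set 'I_n}) : indepb K -> K' \subset K -> indepb K'.
Proof.
move=> iK sK; apply: indep_intro.
  by apply: contraNN (proj1 (andP iK)) => vK'; apply: (subsetP sK).
move=> x y xK yK; apply: (indep_pair iK); exact: (subsetP sK).
Qed.

Lemma indep_add (K : {set 'I_n}) z : indepb K -> z \notin K -> z != v ->
  (forall k, k \in K -> ~~ A z k) -> indepb (z |: K).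
Proof.
move=> iK zK zv H; apply: indep_intro.
  by rewrite !inE negb_or eq_sym zv (proj1 (andP iK)).
move=> x y; rewrite !inE => /orP[/eqP->|xK] /orP[/eqP->|yK]; rewrite ?eqxx // => xy.
- exact: H.
- by rewrite /adj teC23; apply: H.
- exact: (indep_pair iK).
Qed.

Lemma indep_clique (K : {set 'I_n}) : indepb K -> clique 3 E K.
Proof.
move=> iK; apply: clique_of => a b c aK bK cK ab ac bc.
have vK := proj1 (andP iK).
apply: (@R2 n E U F0 v) => //; try exact: (indep_pair iK).
split; last split; last split; try split => //;
  by apply: contraNN vK => /eqP ->.
Qed.

Lemma gclique_clique (S : {set 'I_n}) : v \notin S ->
  (forall x y, x \in S -> y \in S -> x != y -> A x y) -> clique 3 E S.
Proof.
move=> vS H; apply: clique_of => a b c aS bS cS ab ac bc.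
apply: (@R1 n E U F3 v) => //; try exact: H.
split; last split; last split; try split => //;
  by apply: contraNN vS => /eqP ->.
Qed.


Lemma card_bigcup_le (I : finType) (P : {pred I}) (F : I -> {set 'I_n}) :
  #|\bigcup_(i in P) F i| <= \sum_(i in P) #|F i|.
Proof.
apply: (big_ind2 (fun (X : {set 'I_n}) k => #|X| <= k)) => //.
  by rewrite cards0.
move=> X1 k1 X2 k2 h1 h2; apply: leq_trans (leq_add h1 h2).
by rewrite cardsU leq_subr.
Qed.

Lemma bound (M : nat) : (forall S, clique 3 E S -> #|S| <= M) -> n <= 1 + M + M * M * M.
Proof.
move=> HM.
have i0 : indepb set0 by apply: indep_intro => [|x y]; rewrite ?inE.
case: (@arg_maxnP _ set0 indepb (fun K : {set 'I_n} => #|K|) i0) => K iK maxK.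
have vK : v \notin K := proj1 (andP iK).
pose D (i j : 'I_n) := [set x | [&& x != v, x \notin K, A x i, A x j &
   (i == j) ==> [forall k in K, A x k ==> (k == i)]]].
have neqK : forall x k, x \notin K -> k \in K -> x != k.
  by move=> x k xK kK; apply: contraNneq xK => ->.
have Dcl : forall i j, i \in K -> j \in K -> forall x y, x \in D i j -> y \in D i j -> x != y -> A x y.
  move=> i j iK' jK x y; rewrite !inE => /and5P[xv xK xi xj xf] /and5P[yv yK yi yj yf] xy.
  apply: contraT => nxy.
  case: (eqVneq i j) => [eij|nij].
  - subst j; move: xf yf; rewrite eqxx /= => /forall_inP xf /forall_inP yf.
    have nk : forall z k, (forall k, k \in K -> A z k -> k == i) -> k \in K :\ i -> ~~ A z k.
      move=> z k zf; rewrite !inE => /andP[ki kK]; apply: contraNN ki => zk.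
      exact: zf k kK zk.
    have iK1 : indepb (y |: (K :\ i)).
      apply: indep_add => //.
      + by apply: indep_sub iK _; apply: subD1set.
      + by rewrite !inE negb_and yK orbT.
      + move=> k kK; apply: nk kK => k' k'K; exact: (implyP (yf k' k'K)).
    have iK2 : indepb (x |: (y |: (K :\ i))).
      apply: indep_add => //.
      + by rewrite !inE negb_or negb_and xy xK orbT.
      + move=> k; rewrite !inE => /orP[/eqP->|kK]; first exact: nxy.
        apply: nk; last by rewrite !inE.
        move=> k' k'K; exact: (implyP (xf k' k'K)).
    have := maxK _ iK2.
    rewrite !cardsU1 (cardsD1 i K) iK' !inE (negbTE xy) (negbTE xK) (negbTE yK) !andbF /=.
    by rewrite /geq !add1n ltnn.
  - have [] := (@C4 n E U F0 F3 v x i y j).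
    + split; first exact: neqK xK iK'.
      split => //; split; first exact: neqK xK jK.
      split; first by rewrite eq_sym; apply: neqK yK iK'.
      by split => //; apply: neqK yK jK.
    + by rewrite eq_sym.
    + by apply: contraNneq vK => ->.
    + by rewrite eq_sym.
    + by apply: contraNneq vK => ->.
    + done.
    + by rewrite /adj teC23.
    + done.
    + by rewrite /adj teC23.
    + done.
    + exact: (indep_pair iK).
have cover : [set~ v] \subset K :|: \bigcup_(p in setX K K) D p.1 p.2.
  apply/subsetP => x; rewrite !inE => xv.
  case xK: (x \in K) => //=.
  have [i iK' xi] : exists2 i, i \in K & A x i.
    apply/exists_inP; apply: contraT; rewrite negb_exists_in => /forall_inP H.
    have iK1 : indepb (x |: K).
      by apply: indep_add => //; rewrite xK.
    by have := maxK _ iK1; rewrite cardsU1 xK /geq /= add1n ltnn.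
  case: (boolP [exists j in K, (j != i) && A x j]).
  - case/exists_inP => j jK /andP[ji xj].
    apply/bigcupP; exists (i, j); first by rewrite inE iK' jK.
    by rewrite /D !inE xv xK xi xj /= eq_sym (negbTE ji).
  - rewrite negb_exists_in => /forall_inP H.
    apply/bigcupP; exists (i, i); first by rewrite inE iK'.
    rewrite /D !inE xv xK xi /= eqxx /=.
    apply/forall_inP => k kK; apply/implyP => xk.
    by move: (H k kK); rewrite xk andbT negbK.
have cK : #|K| <= M by apply: HM; apply: indep_clique.
have cD : forall p, p \in setX K K -> #|D p.1 p.2| <= M.
  move=> [i j]; rewrite inE => /andP[iK' jK] /=.
  apply: HM; apply: gclique_clique; first by rewrite inE eqxx.
  exact: Dcl.
have h1 := subset_leq_card cover.
rewrite cardsC1 card_ord in h1.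
have h2 := leq_trans h1 (leq_card_setU _ _).
have h3 : #|\bigcup_(p in setX K K) D p.1 p.2| <= #|K| * #|K| * M.
  apply: leq_trans; first exact: card_bigcup_le.
  apply: (@leq_trans (\sum_(p in setX K K) M)).
    by apply: leq_sum => p /cD.
  by rewrite sum_nat_const cardsX.
have h4 : n.-1 <= M + M * M * M.
  apply: leq_trans h2 _; apply: leq_add => //.
  apply: leq_trans h3 _; apply: leq_mul => //; exact: leq_mul.
by rewrite -addnA; case: n h4 {h1 h2} => //.
Qed.

End Main.

Lemma real_part (N m y : R) : (0 < y)%R -> (y ^ 3 = N)%R -> (6 <= N)%R -> (0 <= m)%R ->
  (N <= 1 + m + m ^ 3)%R -> (1 / 2 * y < m)%R.
Proof.
move=> y0 y3 N6 m0 hb.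
apply: Rnot_le_lt => hm.
have h1 : (m ^ 3 <= (1/2 * y) ^ 3)%R by apply: pow_incr; lra.
have h2 : (1 <= y)%R.
  apply: Rnot_lt_le => hy.
  have : (y ^ 3 < 1)%R.
    have [] := pow_lt_1_compat y 3; [split; lra | repeat constructor | done].
  lra.
have h3 : (y <= y ^ 3)%R by simpl; nra.
simpl in h1, h3, y3; nra.
Qed.


Theorem mainTheorem5 :
  exists c1 : R, (0 < c1)%R /\
    forall (n : nat), 5 < n ->
    forall E : {set {set 'I_n}},
      uniform 3 E -> Q_free E [:: (4, 0); (4, 3)] ->
      exists S : {set 'I_n}, homogeneous 3 E S /\
        (c1 * Rpower (INR n) (1 / 3) < INR #|S|)%R.
Proof.
exists (1/2)%R; split; first lra.
move=> n Hn E U Q.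
have F0 : forall S : {set 'I_n}, #|S| = 4 -> induced_edges E S <> 0.
  exact: (Q (4, 0)).
have F3 : forall S : {set 'I_n}, #|S| = 4 -> induced_edges E S <> 3.
  exact: (Q (4, 3)).
have n0 : 0 < n by apply: leq_ltn_trans Hn.
pose v : 'I_n := Ordinal n0.
have c0 : cliqueb E set0.
  apply/cliqueP => e; rewrite subset0 => /eqP -> ; by rewrite cards0.
case: (@arg_maxnP _ set0 (cliqueb E) (fun S : {set 'I_n} => #|S|) c0) => S0 cl0 max0.
have Hm : forall S, clique 3 E S -> #|S| <= #|S0|.
  by move=> S /cliqueP; apply: max0.
have hb := @bound n E U F0 F3 v #|S0| Hm.
exists S0; split; first by left; apply/cliqueP.
have np : (0 < INR n)%R by apply: lt_0_INR; apply/ltP.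
apply: real_part.
- by apply: exp_pos.
- rewrite -Rpower_pow; last by apply: exp_pos.
  rewrite Rpower_mult.
  have -> : (1 / 3 * INR 3 = 1)%R by simpl; field.
  by rewrite Rpower_1.
- have : (INR 6 <= INR n)%R by apply: le_INR; apply/leP.
  by simpl; lra.
- exact: pos_INR.
- have := le_INR _ _ (elimT leP hb).
  by rewrite !plus_INR !mult_INR /=; nra.
Qed.
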